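(* Fix $\eta\in[0,1]$ and an integer $N\ge0$. For every policy $P(u^{+}\mid u,q)\in\mathcal P^{L}_{\pi}$ (lower-bound construction of the context), the induced stationary distribution satisfies $$\pi(S=0\mid u,q)=\bar\eta^{\,u+1}\qquad\text{for all } q\in[0:N] \text{ and all } u \text{ in the support of } U \text{ given } Q=q,$$ in particular $\pi_{S\mid U,Q}$ does not depend on the policy.
   Context: $\bar\eta=1-\eta$, $[a:b]=\{a,\dots,b\}$. Binary energy-harvesting battery law: $P(S^{+}=0\mid x,s)=\bar\eta\,\mathbb{1}\{x=s\}$ for $x\le s$, $x,s\in\{0,1\}$. Lower-bound construction: $\mathcal Q=\mathcal U=[0:N]$; $g_L(q,1)=0$ for all $q$, $g_L(q,0)=q+1$ for $q\in[0:N-1]$, $g_L(N,0)=0$; $f(u^{+},s)=s\,\mathbb{1}\{u^{+}=0\}$. A policy $P(u^{+}\mid u,q)$ induces the kernel $T(s^{+},u^{+},q^{+}\mid s,u,q)=\sum_xP(u^{+}\mid u,q)\mathbb{1}\{x=f(u^{+},s)\}\mathbb{1}\{q^{+}=g_L(q,x)\}P(s^{+}\mid x,s)$ on $\{0,1\}\times\mathcal U\times\mathcal Q$. $\mathcal P^{L}_{\pi}$: policies for which $T$ has a unique stationary distribution $\pi(s,u,q)$, such that for $q\in[0:N-1]$ the variable $U$ given $Q=q$ lies in $[0:q]$ and $P(u^{+}\mid u,q)=0$ unless $u^{+}\in\{0,u+1\}$, and for $q=N$, $U$ lies in $[0:N]$ and $P(0\mid u,N)=1$. *)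

(* Defs.v *)
From HB Require Import structures.
From mathcomp Require Import all_boot all_order all_algebra.
Set Implicit Arguments. Unset Strict Implicit. Unset Printing Implicit Defensive.
Import Order.TTheory GRing.Theory Num.Theory.
Local Open Scope ring_scope.

(* Joint state (s, u, q) in {0,1} x [0:N] x [0:N]. *)
Definition state (N : nat) := ('I_2 * 'I_N.+1 * 'I_N.+1)%type.

(* Binary battery law: P(S+ = 0 | x, s) = (1 - eta) * 1{x = s} (used for x <= s). *)
Definition battery {R : nzRingType} (eta : R) (x s s' : nat) : R :=
  let p0 := (1 - eta) * (x == s)%:R in
  if s' == 0%N then p0 else 1 - p0.

Definition fL (u' s : nat) : nat := if u' == 0%N then s else 0%N.

Definition gL (N q x : nat) : nat :=
  if x == 0%N then (if (q < N)%N then q.+1 else 0%N) else 0%N.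

(* Policy P(u+ | u, q) is written  P u q u'. *)
Definition policy (R : nzRingType) (N : nat) := 'I_N.+1 -> 'I_N.+1 -> 'I_N.+1 -> R.

Definition is_policy {R : numDomainType} {N : nat} (P : policy R N) : Prop :=
  (forall u q u', 0 <= P u q u') /\ (forall u q, \sum_(u' < N.+1) P u q u' = 1).

(* Induced kernel T(s+,u+,q+ | s,u,q), written kernelT eta P (s,u,q) (s+,u+,q+). *)
Definition kernelT {R : nzRingType} (eta : R) {N : nat} (P : policy R N)
    (z z' : state N) : R :=
  let: (s, u, q) := z in
  let: (s', u', q') := z' in
  \sum_(x < 2) P u q u' * (x == fL u' s :> nat)%:R
                 * (q' == gL N q x :> nat)%:R * battery eta x s s'.

Definition is_stationary {R : numDomainType} {N : nat}
    (T : state N -> state N -> R) (pi : state N -> R) : Prop :=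
  [/\ forall z, 0 <= pi z,
      \sum_(z : state N) pi z = 1
    & forall z', pi z' = \sum_(z : state N) pi z * T z z'].

Definition margUQ {R : nzRingType} {N : nat} (pi : state N -> R) (u q : 'I_N.+1) : R :=
  \sum_(s < 2) pi (s, u, q).

Definition in_PL {R : numDomainType} (eta : R) (N : nat) (P : policy R N)
    (pi : state N -> R) : Prop :=
  [/\ is_policy P,
      is_stationary (kernelT eta P) pi
    & (forall pi', is_stationary (kernelT eta P) pi' -> forall z, pi' z = pi z)] /\
  [/\
      (forall q u : 'I_N.+1, (q < N)%N -> (q < u)%N -> margUQ pi u q = 0),
      (forall q u u' : 'I_N.+1, (q < N)%N -> (u' != 0 :> nat) -> (u' != u.+1 :> nat) ->
         P u q u' = 0)
    &
      (forall u : 'I_N.+1, P u ord_max ord0 = 1)].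

(* Main.v *)
Require Import Defs.
From HB Require Import structures.
From mathcomp Require Import all_boot all_order all_algebra.
From mathcomp Require Import ring lra zify.
Import Order.TTheory GRing.Theory Num.Theory.
Local Open Scope ring_scope.

Lemma sum_state (R : nzRingType) N (F : state N -> R) :
  \sum_(z : state N) F z = \sum_(s < 2) \sum_(u < N.+1) \sum_(q < N.+1) F (s,u,q).
Proof.
rewrite pair_bigA /= pair_bigA /=.
by apply: eq_bigr => [[[s u] q]].
Qed.

Lemma kernelE (R : nzRingType) (eta : R) N (P : policy R N) (s s' : 'I_2) (u q u' q' : 'I_N.+1) :
  kernelT eta P (s,u,q) (s',u',q') =
  P u q u' * (q' == gL N q (fL u' s) :> nat)%:R * battery eta (fL u' s) s s'.
Proof.
rewrite /kernelT !big_ord_recr big_ord0 /= /fL.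
case: (_ == 0%N); case: s => [[|[|k]] //] _ /=;
  by rewrite ?mulr1 ?mulr0 ?mul0r ?addr0 ?add0r.
Qed.

Lemma pick1 (R : nzRingType) n (i : nat) : (0 < i <= n)%N -> forall (g : 'I_n.+1 -> R),
  \sum_(u < n.+1) (u.+1 == i)%:R * g u = g (inord i.-1).
Proof.
move=> /andP[i0 iN] g.
rewrite (bigD1 (inord i.-1)) //= inordK; last by lia.
rewrite prednK // eqxx mul1r big1 ?addr0 // => j Hj.
case: eqP => [Hji|_]; last by rewrite mul0r.
exfalso; move/negP: Hj; apply; apply/eqP/val_inj.
rewrite /= inordK; lia.
Qed.

Theorem lemma4 (R : realFieldType) (eta : R) (N : nat) (P : policy R N)
    (pi : state N -> R) :
  0 <= eta <= 1 ->
  in_PL eta P pi ->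
  forall q u : 'I_N.+1, 0 < margUQ pi u q ->
    pi (ord0, u, q) / margUQ pi u q = (1 - eta) ^+ (u : nat).+1.
Proof.
move=> _ [[[Pnn Psum] [pinn pisum stat] _] [_ Psupp Pmax]].
have Pmax0 : forall u (u' : 'I_N.+1), u' != ord0 -> P u ord_max u' = 0.
  move=> u u' Hu'; have := Psum u ord_max.
  rewrite (bigD1 ord0) //= Pmax => H1.
  have H : \sum_(i < N.+1 | i != ord0) P u ord_max i = 0.
    by apply: (addrI 1); rewrite addr0.
  by apply: (psumr_eq0P _ H) => // i _; apply: Pnn.
have Hmarg : forall u' q', margUQ pi u' q' = \sum_(z : state N)
    pi z * (P z.1.2 z.2 u' * (q' == gL N z.2 (fL u' z.1.1) :> nat)%:R).
  move=> u' q'; rewrite /margUQ big_ord_recl big_ord1 !stat -big_split.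
  apply: eq_bigr => [[[s u] q]] _; rewrite !kernelE /= -!mulrDr.
  by rewrite /battery /= addrC subrK mulr1.
have Hpi0 : forall u' q', pi (ord0, u', q') = \sum_(z : state N)
    pi z * (P z.1.2 z.2 u' * (q' == gL N z.2 (fL u' z.1.1) :> nat)%:R
      * ((1 - eta) * (fL u' z.1.1 == z.1.1 :> nat)%:R)).
  move=> u' q'; rewrite stat; apply: eq_bigr => [[[s u] q]] _.
  by rewrite kernelE /battery /=.
suff H : forall n (u q : 'I_N.+1), u = n :> nat -> margUQ pi u q != 0 ->
    pi (ord0, u, q) / margUQ pi u q = (1 - eta) ^+ n.+1.
  by move=> q u Hpos; apply: H => //; rewrite gt_eqF.
elim=> [|n IH] u q Hu Hm.
  have E : pi (ord0, u, q) = margUQ pi u q * (1 - eta).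
    rewrite Hpi0 Hmarg mulr_suml; apply: eq_bigr => [[[s u0] q0]] _ /=.
    by rewrite /fL Hu /= eqxx mulr1 !mulrA.
  by rewrite E expr1 mulrAC divff // mul1r.
have Hu0 : (u == 0 :> nat) = false by rewrite Hu.
have Hterm : forall (s : 'I_2) (u0 q0 : 'I_N.+1),
    P u0 q0 u * (q == gL N q0 (fL u s) :> nat)%:R =
    (u0.+1 == u :> nat)%:R * ((q0.+1 == q :> nat)%:R * P u0 q0 u).
  move=> s u0 q0; rewrite /fL Hu0 /gL /=.
  case: (ltnP q0 N) => Hq0.
    case: (eqVneq (u0.+1) (nat_of_ord u)) => [E|E].
      by rewrite mul1r mulrC eq_sym.
    by rewrite Psupp // ?Hu0 // 1?eq_sym // !mul0r.
  have -> : q0 = ord_max by apply/val_inj => /=; have := ltn_ord q0; lia.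
  rewrite Pmax0 ?mul0r ?mulr0 //; apply/negP => /eqP/(congr1 val) /=; lia.
have Mq : margUQ pi u q = \sum_(s < 2) \sum_(u0 < N.+1) (u0.+1 == u :> nat)%:R *
    \sum_(q0 < N.+1) (q0.+1 == q :> nat)%:R * (pi (s, u0, q0) * P u0 q0 u).
  rewrite Hmarg sum_state; apply: eq_bigr => s _; apply: eq_bigr => u0 _.
  rewrite mulr_sumr; apply: eq_bigr => q0 _ /=; rewrite Hterm.
  ring.
have Pq : pi (ord0, u, q) = \sum_(s < 2) \sum_(u0 < N.+1) (u0.+1 == u :> nat)%:R *
    \sum_(q0 < N.+1) (q0.+1 == q :> nat)%:R *
      (pi (s, u0, q0) * P u0 q0 u * ((1 - eta) * (0 == s :> nat)%:R)).
  rewrite Hpi0 sum_state; apply: eq_bigr => s _; apply: eq_bigr => u0 _.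
  rewrite mulr_sumr; apply: eq_bigr => q0 _ /=; rewrite Hterm.
  rewrite /fL Hu0 /=. ring.
case Hq : (nat_of_ord q) => [|m].
  move: Hm; rewrite Mq big1 ?eqxx // => s _; rewrite big1 // => u0 _.
  by rewrite big1 ?mulr0 // => q0 _; rewrite Hq /= mul0r.
have Hqr : (0 < q <= N)%N by rewrite Hq /=; have := ltn_ord q; lia.
have Hur : (0 < u <= N)%N by rewrite Hu /=; have := ltn_ord u; lia.
rewrite Mq Pq.
under eq_bigr => s _ do under eq_bigr => u0 _ do rewrite (@pick1 R _ _ Hqr).
under eq_bigr => s _ do rewrite (@pick1 R _ _ Hur).
under [X in _ / X]eq_bigr => s _ do under eq_bigr => u0 _ do rewrite (@pick1 R _ _ Hqr).
under [X in _ / X]eq_bigr => s _ do rewrite (@pick1 R _ _ Hur).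
set u1 : 'I_N.+1 := inord u.-1; set q1 : 'I_N.+1 := inord q.-1.
have Hu1 : nat_of_ord u1 = n by rewrite /u1 inordK Hu //=; have := ltn_ord u; lia.
rewrite -mulr_suml.
have -> : \sum_(i < 2) pi (i, u1, q1) * P u1 q1 u * ((1 - eta) * (0 == i :> nat)%:R)
   = pi (ord0, u1, q1) * P u1 q1 u * (1 - eta).
  by rewrite big_ord_recl big_ord1 /= mulr1 mulr0 mulr0 addr0.
move: Hm; rewrite Mq.
under eq_bigr => s _ do under eq_bigr => u0 _ do rewrite (@pick1 R _ _ Hqr).
under eq_bigr => s _ do rewrite (@pick1 R _ _ Hur).
rewrite -/u1 -/q1 -mulr_suml mulf_eq0 negb_or => /andP[H1 H2].
have := IH u1 q1 Hu1 H1; rewrite /margUQ => IH'.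
rewrite exprS -IH'.
field.
by rewrite H2 H1.
Qed.
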